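(* Let $\phi\in(0,1)$ and $h_G>1$. For $b\in(0,1)$ define $g(x,b)=\frac{x^{1-b}-(1-x)^{1-b}}{x(1-x)^{1-b}-(1-x)x^{1-b}}$ for $x\in(\tfrac12,1)$, $g(\tfrac12,b)=\frac2b-2$, and $g(1,b)=+\infty$. Then: (i) $g(x,b)$ is continuous on $x\in[\tfrac12,1]$ (as an extended-real-valued function); (ii) $g(x,b)$ is increasing in $x$ and decreasing in $b$; (iii) if $\frac{2}{\phi(h_G-1)+2}<b<1$, then the equation $g(x,b)=\phi(h_G-1)$ has a unique solution $\hat x(\phi,h_G,b)\in(\tfrac12,1)$, and $\hat x(\phi,h_G,b)$ is increasing with respect to each of $b$, $h_G$, and $\phi$. *)

(* Defs.v *)
From HB Require Import structures.
From mathcomp Require Import all_boot all_order all_algebra.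
From mathcomp Require Import all_classical all_reals all_analysis.
Set Implicit Arguments. Unset Strict Implicit. Unset Printing Implicit Defensive.
Import Order.TTheory GRing.Theory Num.Theory.
Import numFieldNormedType.Exports.
Local Open Scope classical_set_scope.
Local Open Scope ring_scope.

Definition gfun {R : realType} (x b : R) : \bar R :=
  if x == 1 then +oo%E
  else if x == 2^-1 then (2 / b - 2)%:E
  else ((x `^ (1 - b) - (1 - x) `^ (1 - b)) /
        (x * (1 - x) `^ (1 - b) - (1 - x) * x `^ (1 - b)))%:E.

(* Main.v *)
Require Import Defs.
From HB Require Import structures.
From mathcomp Require Import all_boot all_order all_algebra.
From mathcomp Require Import all_classical all_reals all_analysis.
From mathcomp Require Import ring lra.
Import Order.TTheory GRing.Theory Num.Theory.
Import numFieldNormedType.Exports.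
Local Open Scope classical_set_scope.
Local Open Scope ring_scope.
Set Implicit Arguments. Unset Strict Implicit. Unset Printing Implicit Defensive.
Section S.
Variable R : realType.

Lemma incr_deriv (f df : R -> R) (a c : R) : a < c ->
  (forall x, a <= x <= c -> is_derive x 1 f (df x)) ->
  (forall x, a < x < c -> 0 < df x) -> f a < f c.
Proof.
move=> ac hd hp.
have h1 : forall x, x \in `]a, c[ -> is_derive x 1 f (df x).
  by move=> x; rewrite in_itv /= => /andP[h1 h2]; apply: hd; rewrite !ltW.
have h2 : {within `[a, c], continuous f}.
  apply: continuous_in_subspaceT => x; rewrite inE /= in_itv /= => xin.
  apply: differentiable_continuous; apply/derivable1_diffP.
  by have [] := hd x xin.
have [y yin E] := MVT ac h1 h2.
rewrite -subr_gt0 E mulr_gt0 ?subr_gt0 //; apply: hp.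
by move: yin; rewrite in_itv.
Qed.

Lemma powRE (x t : R) : 0 < x -> x `^ t = expR (t * ln x).
Proof. by move=> x0; rewrite /powR gt_eqF. Qed.

Lemma powR_ltr_exp (x t1 t2 : R) : 1 < x -> t1 < t2 -> x `^ t1 < x `^ t2.
Proof.
move=> x1 t12; have x0 : 0 < x by apply: lt_trans x1.
by rewrite !powRE // ltr_expR ltr_pM2r // ln_gt0.
Qed.

Lemma powR_gt1 (x t : R) : 1 < x -> 0 < t -> 1 < x `^ t.
Proof. by move=> x1 t0; rewrite -{1}(powRr0 x) powR_ltr_exp. Qed.

Lemma powR_ltx (x t : R) : 1 < x -> t < 1 -> x `^ t < x.
Proof.
move=> x1 t1; have x0 : 0 < x by apply: lt_trans x1.
by rewrite -{2}(powRr1 (ltW x0)) powR_ltr_exp.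
Qed.

Lemma powR_m1 (x t : R) : 0 < x -> x `^ (t - 1) = x `^ t / x.
Proof.
move=> x0; rewrite powRB ?powRr1 ?ltW //.
by rewrite (gt_eqF x0) implybT.
Qed.

Lemma powR_Nm1 (x t : R) : 0 < x -> x `^ (- t - 1) = (x `^ t)^-1 / x.
Proof. by move=> x0; rewrite powR_m1 // powRN. Qed.

Definition kf (t y : R) := t * (y - y^-1) - y `^ t + y `^ (- t).

Lemma kf_der (t x : R) : 0 < x ->
  is_derive x 1 (kf t)
   (t * (1 + x ^- 2) - t * x `^ (t - 1) + (- t) * x `^ (- t - 1)).
Proof.
move=> x0.
have P1 := is_derive1_powR t x0.
have P2 := is_derive1_powR (- t) x0.
rewrite /kf; apply: is_derive_eq.
  apply: is_deriveD.
  apply: is_deriveB.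
  apply: is_deriveZ. apply: is_deriveB. apply: is_deriveV. by rewrite gt_eqF.
by rewrite /= [(_ *: 1)]mulr1 opprK.
Qed.

Lemma kf_gt0 (t r : R) : 0 < t < 1 -> 1 < r -> 0 < kf t r.
Proof.
case/andP => t0 t1 r1.
have k1 : kf t 1 = 0.
  by rewrite /kf !powR1 invr1 subrr mulr0 sub0r addNr.
rewrite -k1.
apply: (@incr_deriv (kf t)
  (fun x => t * (1 + x ^- 2) - t * x `^ (t - 1) + (- t) * x `^ (- t - 1)) 1 r r1).
  move=> x /andP[x1 _]; apply: kf_der; exact: lt_le_trans x1.
move=> x /andP[x1 _]; have x0 : 0 < x by apply: lt_trans x1.
rewrite powR_m1 // powR_Nm1 //.
have u1 : 1 < x `^ t by apply: powR_gt1.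
have ux : x `^ t < x by apply: powR_ltx.
set u := x `^ t in u1 ux *.
have u0 : 0 < u by apply: lt_trans u1.
have -> : t * (1 + x ^- 2) - t * (u / x) + - t * (u^-1 / x)
   = t * (u * x - 1) * (x - u) / (u * x ^+ 2).
  by field; rewrite ?gt_eqF.
apply: divr_gt0; last by rewrite mulr_gt0 // exprn_gt0.
apply: mulr_gt0; last by rewrite subr_gt0.
apply: mulr_gt0 => //; rewrite subr_gt0.
by rewrite -[1]mulr1 ltr_pM // ltW.
Qed.


Definition Qf (t y : R) := (y `^ t - 1) * (y + 1) / ((y `^ t + 1) * (y - 1)).

Lemma Qf_der (t x : R) : 1 < x ->
  is_derive x 1 (Qf t) (2 * x `^ t * kf t x / ((x `^ t + 1) * (x - 1)) ^+ 2).
Proof.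
move=> x1; have x0 : 0 < x by apply: lt_trans x1.
have P1 := is_derive1_powR t x0.
rewrite /Qf; apply: is_derive_eq.
  apply: is_deriveM.
  apply: is_deriveV.
  by rewrite mulf_neq0 // gt_eqF // ?subr_gt0 // addr_gt0 // powR_gt0.
rewrite /= /kf powR_m1 // powRN.
have u0 : 0 < x `^ t by apply: powR_gt0.
set u := x `^ t in u0 *.
rewrite /GRing.scale /=. field. by rewrite !gt_eqF // ?subr_gt0 // addr_gt0.
Qed.

Lemma Qf_lt (t r1 r2 : R) : 0 < t < 1 -> 1 < r1 -> r1 < r2 -> Qf t r1 < Qf t r2.
Proof.
move=> t01 r1g r12.
apply: (@incr_deriv (Qf t)
  (fun x => 2 * x `^ t * kf t x / ((x `^ t + 1) * (x - 1)) ^+ 2) r1 r2 r12).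
  move=> x /andP[x1 _]; apply: Qf_der; exact: lt_le_trans x1.
move=> x /andP[x1 _]; have x1' : 1 < x by apply: lt_trans x1.
have x0 : 0 < x by apply: lt_trans x1'.
apply: divr_gt0; last first.
  by rewrite exprn_gt0 // mulr_gt0 ?subr_gt0 // addr_gt0 // powR_gt0.
by rewrite mulr_gt0 ?kf_gt0 // mulr_gt0 // powR_gt0.
Qed.

Definition Ff (t r : R) := (1 + r) * (r `^ t - 1) / (r - r `^ t).

Lemma Qf_lt1 (t r : R) : 0 < t < 1 -> 1 < r -> Qf t r < 1.
Proof.
case/andP=> t0 t1 r1; have r0 : 0 < r by apply: lt_trans r1.
have u1 : 1 < r `^ t by apply: powR_gt1.
have ur : r `^ t < r by apply: powR_ltx.
rewrite /Qf ltr_pdivrMr ?mul1r; last by rewrite mulr_gt0 ?subr_gt0 // addr_gt0 // powR_gt0.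
set u := r `^ t in u1 ur *.
nra.
Qed.

Lemma Ff_Q (t r : R) : 0 < t < 1 -> 1 < r -> Ff t r = 2 * Qf t r / (1 - Qf t r).
Proof.
case/andP=> t0 t1 r1; have r0 : 0 < r by apply: lt_trans r1.
have u1 : 1 < r `^ t by apply: powR_gt1.
have ur : r `^ t < r by apply: powR_ltx.
rewrite /Ff /Qf.
set u := r `^ t in u1 ur *.
have h1 : (u + 1) * (r - 1) - (u - 1) * (r + 1) != 0.
  by rewrite gt_eqF //; nra.
field.
by rewrite h1 !gt_eqF ?subr_gt0 // addr_gt0 // (lt_trans ltr01).
Qed.

Lemma Ff_lt (t r1 r2 : R) : 0 < t < 1 -> 1 < r1 -> r1 < r2 -> Ff t r1 < Ff t r2.
Proof.
move=> t01 r1g r12; have r2g : 1 < r2 by apply: lt_trans r12.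
rewrite !Ff_Q //.
have q12 := Qf_lt t01 r1g r12.
have q2 := Qf_lt1 t01 r2g.
have q1 : Qf t r1 < 1 by apply: lt_trans q2.
set a := Qf t r1 in q12 q1 *; set c := Qf t r2 in q12 q2 *.
rewrite ltr_pdivrMr ?subr_gt0 // mulrAC ltr_pdivlMr ?subr_gt0 //.
nra.
Qed.

Lemma Ff_lt_t (t1 t2 r : R) : 0 < t1 -> t1 < t2 -> t2 < 1 -> 1 < r ->
  Ff t1 r < Ff t2 r.
Proof.
move=> t10 t12 t21 r1; have r0 : 0 < r by apply: lt_trans r1.
have u1 : 1 < r `^ t1 by apply: powR_gt1.
have u12 : r `^ t1 < r `^ t2 by apply: powR_ltr_exp.
have u2 : r `^ t2 < r by apply: powR_ltx.
rewrite /Ff.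
set a := r `^ t1 in u1 u12 *; set c := r `^ t2 in u12 u2 *.
rewrite ltr_pdivrMr ?subr_gt0 ?(lt_trans u12) // mulrAC ltr_pdivlMr ?subr_gt0 //.
rewrite -subr_gt0.
have -> : (1 + r) * (c - 1) * (r - a) - (1 + r) * (a - 1) * (r - c)
  = (1 + r) * ((c - a) * (r - 1)) by ring.
by rewrite !mulr_gt0 ?subr_gt0 // addr_gt0.
Qed.

Definition form (b z : R) := (z `^ (1 - b) - (1 - z) `^ (1 - b)) /
        (z * (1 - z) `^ (1 - b) - (1 - z) * z `^ (1 - b)).

Definition rr (z : R) := z / (1 - z).

Lemma rr_gt1 (z : R) : 2^-1 < z -> z < 1 -> 1 < rr z.
Proof.
move=> z1 z2; rewrite /rr ltr_pdivlMr ?subr_gt0 // mul1r.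
have : 1 < z * 2 by rewrite -ltr_pdivrMr // div1r.
lra.
Qed.

Lemma rr_lt (z1 z2 : R) : z1 < z2 -> z2 < 1 -> rr z1 < rr z2.
Proof.
move=> z12 z2l; have z1l : z1 < 1 by apply: lt_trans z2l.
rewrite /rr ltr_pdivrMr ?subr_gt0 // mulrAC ltr_pdivlMr ?subr_gt0 //.
nra.
Qed.

Lemma form_Ff (b z : R) : 0 < b < 1 -> 2^-1 < z -> z < 1 -> form b z = Ff (1 - b) (rr z).
Proof.
case/andP=> b0 b1 z1 z2.
have r1 := rr_gt1 z1 z2.
have c0 : 0 < 1 - z by rewrite subr_gt0.
have z0 : 0 < z by apply: lt_trans z1.
have zr : z = rr z * (1 - z) by rewrite /rr divfK // gt_eqF.
have t01 : 0 < 1 - b < 1 by apply/andP; split; lra.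
have ur : rr z `^ (1 - b) < rr z by apply: powR_ltx; lra.
rewrite /form /Ff.
have -> : z `^ (1 - b) = rr z `^ (1 - b) * (1 - z) `^ (1 - b).
  by rewrite {1}zr powRM // ltW // (lt_trans ltr01).
have C0 : 0 < (1 - z) `^ (1 - b) by apply: powR_gt0.
set u := rr z `^ (1 - b) in ur *; set C := (1 - z) `^ (1 - b) in C0 *.
rewrite /rr in ur *.
clearbody u C.
have h1 : z / (1 - z) - u != 0 by rewrite gt_eqF // subr_gt0.
have h2 : z * C - (1 - z) * (u * C) != 0.
  have -> : z * C - (1 - z) * (u * C) = C * (1 - z) * (z / (1 - z) - u).
    by field; rewrite gt_eqF.
  by rewrite gt_eqF // !mulr_gt0 // subr_gt0.
field.
by rewrite h2 andbT !gt_eqF ?subr_gt0 // mulNr subr_gt0 -ltr_pdivlMr.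
Qed.

Lemma der_cont (f : R -> R) (x df : R) : is_derive x 1 f df -> {for x, continuous f}.
Proof. by case=> d _; apply: differentiable_continuous; apply/derivable1_diffP. Qed.

Lemma Ff_cont (t r : R) : 0 < t < 1 -> 1 < r -> {for r, continuous (Ff t)}.
Proof.
case/andP=> t0 t1 r1; have r0 : 0 < r by apply: lt_trans r1.
have P1 := is_derive1_powR t r0.
apply: der_cont; rewrite /Ff.
apply: is_deriveM; apply: is_deriveV.
by rewrite gt_eqF // subr_gt0 powR_ltx.
Qed.

Lemma rr_cont (x : R) : x < 1 -> {for x, continuous rr}.
Proof.
move=> x1; apply: der_cont; rewrite /rr.
by apply: is_deriveM; apply: is_deriveV; rewrite gt_eqF // subr_gt0.
Qed.

Definition Kf (b z : R) := if z == 2^-1 then 2 / b - 2 else form b z.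

Lemma Kf_near (b x : R) : 0 < b < 1 -> 2^-1 < x < 1 ->
  \forall z \near x, Kf b z = Ff (1 - b) (rr z).
Proof.
move=> hb /andP[x1 x2]; near=> z.
have z1 : 2^-1 < z by near: z; exact: lt_nbhsr.
have z2 : z < 1 by near: z; exact: lt_nbhsl.
by rewrite /Kf gt_eqF // form_Ff.
Unshelve. all: by end_near. Qed.

Lemma Kf_cont (b x : R) : 0 < b < 1 -> 2^-1 < x < 1 -> {for x, continuous (Kf b)}.
Proof.
move=> hb hx; have E := Kf_near hb hx.
have /andP[x1 x2] := hx.
have /andP[b0 b1] := hb.
have c : {for x, continuous (Ff (1 - b) \o rr)}.
  apply: continuous_comp; first exact: rr_cont.
  apply: Ff_cont; last exact: rr_gt1.
  by apply/andP; split; lra.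
rewrite /prop_for /continuous_at.
have -> : Kf b x = (Ff (1 - b) \o rr) x by exact: (nbhs_singleton E).
apply: (cvg_trans _ c); apply: near_eq_cvg.
by apply: filterS E => z ->.
Qed.

Lemma pow_mvt (t r : R) : 1 < r ->
  exists2 c, 1 < c < r & r `^ t - 1 = t * c `^ (t - 1) * (r - 1).
Proof.
move=> r1.
have h1 : forall x, x \in `]1, r[ -> is_derive x 1 (@powR R ^~ t) (t * x `^ (t - 1)).
  move=> x; rewrite in_itv /= => /andP[x1 _]; apply: is_derive1_powR.
  exact: lt_trans x1.
have h2 : {within `[1, r], continuous (@powR R ^~ t)}.
  apply: continuous_in_subspaceT => x; rewrite inE /= in_itv /= => /andP[x1 _].
  apply: der_cont; apply: is_derive1_powR; exact: lt_le_trans ltr01 x1.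
have [c cin E] := MVT r1 h1 h2.
exists c; first by move: cin; rewrite in_itv.
by move: E; rewrite /= powR1.
Qed.

Lemma Q_bounds (t r : R) : 0 < t < 1 -> 1 < r -> t / r <= Qf t r <= t * (r + 1) / 2.
Proof.
case/andP=> t0 t1 r1; have r0 : 0 < r by apply: lt_trans r1.
have [c /andP[c1 cr] E] := pow_mvt t r1.
have c0 : 0 < c by apply: lt_trans c1.
have p1 : c `^ (t - 1) < 1.
  by rewrite -[X in _ < X](powRr0 c) powR_ltr_exp // subr_lt0.
have p2 : r `^ t / r <= c `^ (t - 1).
  rewrite -powR_m1 // !powRE // ler_expR.
  have : ln c <= ln r by rewrite ler_ln ?posrE // ltW.
  nra.
have u1 : 1 < r `^ t by apply: powR_gt1.
have ur : r `^ t < r by apply: powR_ltx.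
have p0 : 0 < c `^ (t - 1) by apply: powR_gt0.
rewrite /Qf E.
set u := r `^ t in u1 ur p2 *; set p := c `^ (t - 1) in p0 p1 p2 *.
have -> : t * p * (r - 1) * (r + 1) / ((u + 1) * (r - 1)) = t * p * (r + 1) / (u + 1).
  by field; rewrite !gt_eqF ?subr_gt0 // addr_gt0 // (lt_trans ltr01).
have u0 : 0 < u + 1 by rewrite addr_gt0 // (lt_trans ltr01).
have hp : u <= p * r by rewrite -ler_pdivrMr.
apply/andP; split.
  rewrite ler_pdivrMr // mulrAC ler_pdivlMr //.
  have H1 : 0 <= t * (r + 1) * (p * r - u).
    by rewrite !mulr_ge0 ?subr_ge0 ?addr_ge0 // ltW.
  have ur1 : 1 <= u * r.
    apply: (le_trans (ltW u1)); rewrite ler_peMr ?ltW //; exact: (lt_trans ltr01 u1).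
  have H2 : 0 <= t * (u * r - 1) by apply: mulr_ge0; [exact: ltW | rewrite subr_ge0].
  nra.
rewrite ler_pdivrMr //.
have H1 : 0 <= t * (r + 1) * (u + 1 - 2 * p).
  by apply: mulr_ge0; [apply: mulr_ge0; [exact: ltW | lra] | lra].
nra.
Qed.

Lemma Kf_right (b : R) : 0 < b < 1 -> Kf b z @[z --> 2^-1^'+] --> 2 / b - 2.
Proof.
case/andP=> b0 b1.
have t01 : 0 < 1 - b < 1 by apply/andP; split; lra.
pose h := fun y : R => 2 * y / (1 - y).
have hc : {for (1 - b), continuous h}.
  apply: der_cont; rewrite /h.
  apply: is_deriveM; apply: is_deriveV.
  by rewrite gt_eqF //; lra.
have hv : h (1 - b) = 2 / b - 2.
  by rewrite /h; field; rewrite gt_eqF //; lra.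
pose lo := fun z : R => (1 - b) * (z^-1 - 1).
pose hi := fun z : R => (1 - b) / (2 * (1 - z)).
have loc : {for 2^-1, continuous lo}.
  apply: der_cont; rewrite /lo.
  apply: is_deriveM; apply: is_deriveB; apply: is_deriveV.
  by rewrite gt_eqF.
have hic : {for 2^-1, continuous hi}.
  apply: der_cont; rewrite /hi.
  apply: is_deriveM; apply: is_deriveV.
  by rewrite mulf_neq0 // gt_eqF // subr_gt0 invf_lt1 // ltr1n.
have lov : lo 2^-1 = 1 - b by rewrite /lo invrK; field.
have hiv : hi 2^-1 = 1 - b by rewrite /hi; field.
have Qc : Qf (1 - b) (rr z) @[z --> 2^-1^'+] --> 1 - b.
  apply: (squeeze_cvgr (f := lo) (h := hi)).
  - near=> z.
    have z1 : 2^-1 < z by near: z; exact: nbhs_right_gt.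
    have z2 : z < 1 by near: z; apply: nbhs_right_lt; rewrite invf_lt1 // ltr1n.
    have r1 := rr_gt1 z1 z2.
    have := Q_bounds t01 r1.
    have z0 : 0 < z by apply: lt_trans z1.
    have -> : lo z = (1 - b) / rr z.
      by rewrite /lo /rr; field; rewrite !gt_eqF // subr_gt0.
    have -> : hi z = (1 - b) * (rr z + 1) / 2.
      by rewrite /hi /rr; field; rewrite !gt_eqF // subr_gt0.
    done.
  - rewrite -lov; exact: cvg_within_filter.
  - rewrite -hiv; exact: cvg_within_filter.
have := @continuous_cvg _ _ _ _ _ _ _ _ hc Qc.
rewrite hv => H; apply: (cvg_trans _ (H _)); apply: near_eq_cvg.
near=> z.
have z1 : 2^-1 < z by near: z; exact: nbhs_right_gt.
have z2 : z < 1 by near: z; apply: nbhs_right_lt; rewrite invf_lt1 // ltr1n.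
have r1 := rr_gt1 z1 z2.
have hb : 0 < b < 1 by rewrite b0 b1.
by rewrite /Kf gt_eqF // form_Ff // Ff_Q.
Unshelve. all: by end_near. Qed.

Lemma Kf_lt_int (b x y : R) : 0 < b < 1 -> 2^-1 < x -> x < y -> y < 1 -> Kf b x < Kf b y.
Proof.
move=> hb x1 xy y1; have y2 : 2^-1 < y by apply: lt_trans xy.
have x2 : x < 1 by apply: lt_trans y1.
have /andP[b0 b1] := hb.
rewrite /Kf !gt_eqF // !form_Ff //; apply: Ff_lt.
- by apply/andP; split; lra.
- exact: rr_gt1.
- exact: rr_lt.
Qed.

Lemma Kf_half (b : R) : Kf b 2^-1 = 2 / b - 2.
Proof. by rewrite /Kf eqxx. Qed.

Lemma Kf_lt (b x y : R) : 0 < b < 1 -> 2^-1 <= x -> x < y -> y < 1 -> Kf b x < Kf b y.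
Proof.
move=> hb; rewrite le_eqVlt => /predU1P[<- hy y1|]; last exact: Kf_lt_int.
pose m := (2^-1 + y) / 2.
have m1 : 2^-1 < m by rewrite /m; lra.
have m2 : m < y by rewrite /m; lra.
apply: (le_lt_trans _ (Kf_lt_int hb m1 m2 y1)).
rewrite Kf_half.
apply: (ler_cvg_to (Kf_right hb) (cvg_cst (Kf b m))).
near=> z.
have z1 : 2^-1 < z by near: z; exact: nbhs_right_gt.
have z2 : z < m by near: z; exact: nbhs_right_lt.
apply/ltW; apply: Kf_lt_int => //; lra.
Unshelve. all: by end_near. Qed.

Lemma Kf_lt_b (x b1 b2 : R) : 2^-1 <= x < 1 -> 0 < b1 -> b1 < b2 -> b2 < 1 ->
  Kf b2 x < Kf b1 x.
Proof.
case/andP; rewrite le_eqVlt => /predU1P[<- _|x1 x2] b10 b12 b21.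
  rewrite !Kf_half ltrD2r ltr_pM2l // ltf_pV2 //; exact: lt_trans b12.
rewrite /Kf !gt_eqF // !form_Ff //; first last.
- by apply/andP; split; lra.
- by apply/andP; split; lra.
apply: Ff_lt_t; try lra.
exact: rr_gt1.
Qed.

Lemma Ff_ge (t r : R) : 0 < t < 1 -> 1 < r -> r `^ t - 1 <= Ff t r.
Proof.
case/andP=> t0 t1 r1; have r0 : 0 < r by apply: lt_trans r1.
have u1 : 1 < r `^ t by apply: powR_gt1.
have ur : r `^ t < r by apply: powR_ltx.
rewrite /Ff; set u := r `^ t in u1 ur *.
rewrite ler_pdivlMr ?subr_gt0 //.
nra.
Qed.

Lemma Kf_big (b A : R) : 0 < b < 1 -> exists y, 2^-1 < y < 1 /\ A < Kf b y.
Proof.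
move=> hb; have /andP[b0 b1] := hb.
have t01 : 0 < 1 - b < 1 by apply/andP; split; lra.
pose B := Num.max (A + 1) 1.
have B1 : 1 <= B by rewrite /B le_max lexx orbT.
have AB : A + 1 <= B by rewrite /B le_max lexx.
have B0 : 0 < B by apply: lt_le_trans B1.
pose M := B `^ ((1 - b)^-1).
have M0 : 0 < M by apply: powR_gt0.
pose r := M + 1.
have r1 : 1 < r by rewrite /r ltrDr.
have Mt : M `^ (1 - b) = B.
  by rewrite /M -powRrM mulVf ?powRr1 ?ltW // gt_eqF //; lra.
have rt : B < r `^ (1 - b).
  rewrite -Mt; apply: (@gt0_ltr_powR R (1 - b)).
  - lra.
  - by rewrite nnegrE ltW.
  - by rewrite nnegrE ltW // (lt_trans M0) // /r ltrDl.
  - by rewrite /r ltrDl.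
have r0 : 0 < r by apply: lt_trans r1.
exists (r / (1 + r)).
have hy1 : 2^-1 < r / (1 + r).
  rewrite ltr_pdivlMr ?addr_gt0 //; lra.
have hy2 : r / (1 + r) < 1.
  rewrite ltr_pdivrMr ?addr_gt0 //; lra.
split; first by rewrite hy1 hy2.
rewrite /Kf gt_eqF // form_Ff //.
have -> : rr (r / (1 + r)) = r.
  by rewrite /rr; field; rewrite addrK oner_neq0 andbT gt_eqF // addr_gt0.
apply: (lt_le_trans _ (Ff_ge t01 r1)); lra.
Qed.

Lemma Kf_within (b y : R) : 0 < b < 1 -> 2^-1 < y -> y < 1 ->
  {within `[2^-1, y], continuous (Kf b)}.
Proof.
move=> hb y1 y2; apply/continuous_within_itvP => //; split.
- move=> x; rewrite in_itv /= => /andP[x1 x2]; apply: Kf_cont => //.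
  by rewrite x1 (lt_trans x2).
- rewrite Kf_half; exact: Kf_right.
- by apply: cvg_within_filter; apply: Kf_cont => //; rewrite y1 y2.
Qed.

Lemma Kf_solve (b v : R) : 0 < b < 1 -> 2 / b - 2 < v ->
  exists x, 2^-1 < x < 1 /\ Kf b x = v.
Proof.
move=> hb hv.
have [y [/andP[y1 y2] yv]] := Kf_big v hb.
have hm : Num.min (Kf b 2^-1) (Kf b y) <= v <= Num.max (Kf b 2^-1) (Kf b y).
  rewrite Kf_half; apply/andP; split.
  - by rewrite ge_min ltW.
  - by rewrite le_max (ltW yv) orbT.
have [c cin Kc] := IVT (ltW y1) (Kf_within hb y1 y2) hm.
exists c; split => //.
move: cin; rewrite in_itv /= => /andP[c1 c2].
move: c1; rewrite le_eqVlt => /predU1P[E|c1].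
  by move: Kc; rewrite -E Kf_half => E'; move: hv; rewrite E' ltxx.
by rewrite c1 (le_lt_trans c2).
Qed.

Lemma gfunE (b z : R) : z != 1 -> gfun z b = (Kf b z)%:E.
Proof. by move=> h; rewrite /gfun /Kf (negbTE h); case: ifP. Qed.

Lemma Kf_mono_rev (b x y : R) : 0 < b < 1 -> 2^-1 <= x < 1 -> 2^-1 <= y < 1 ->
  Kf b x < Kf b y -> x < y.
Proof.
move=> hb /andP[x1 x2] /andP[y1 y2] K.
case: (ltgtP x y) => // [yx|xy].
  by have := Kf_lt hb y1 yx x2; rewrite ltNge (ltW K).
by move: K; rewrite xy ltxx.
Qed.

Lemma gfun_cont (b : R) : 0 < b < 1 ->
  {within `[2^-1, 1], continuous (fun x => gfun x b)}.
Proof.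
move=> hb; apply/subspace_continuousP => x /=; rewrite /from_subspace in_itv /= => /andP[x1 x2].
case: (eqVneq x 1) => [->|xn1].
  have -> : gfun 1 b = +oo%E by rewrite /gfun eqxx.
  apply/cvgeyPge => A.
  have [y [/andP[y1 y2] yA]] := Kf_big A hb.
  rewrite near_withinE; near=> z => hz.
  have zy : y < z by near: z; exact: lt_nbhsr.
  move: hz; rewrite /= in_itv /= => /andP[_ z1].
  case: (eqVneq z 1) => [->|zn1]; first by rewrite /gfun eqxx leey.
  rewrite gfunE // lee_fin; apply/ltW; apply: (lt_trans yA).
  apply: Kf_lt_int => //.
  by rewrite lt_neqAle zn1 z1.
have xl1 : x < 1 by rewrite lt_neqAle xn1 x2.
have near1 : \forall z \near x, z < 1 by exact: lt_nbhsl.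
move: x1; rewrite le_eqVlt => /predU1P[xh|x1].
  subst x.
  rewrite gfunE // Kf_half; apply: cvg_EFin.
    rewrite near_withinE; near=> z => _.
    have zl : z < 1 by near: z.
    by rewrite gfunE // lt_eqF.
  apply/cvgrPdist_lt => e e0.
  move/cvgrPdist_lt: (Kf_right hb) => /(_ e e0).
  rewrite /at_right near_withinE => H.
  near=> z => hz.
  have zl : z < 1 by near: z.
  move: hz; rewrite /= in_itv /= => /andP[+ _]; rewrite le_eqVlt => /predU1P[<-|zh].
    by rewrite /= gfunE ?lt_eqF // Kf_half /= subrr normr0.
  rewrite /= gfunE ?lt_eqF //=.
  have Hz : 2^-1 < z -> `|2 / b - 2 - Kf b z| < e by near: z; exact: H.
  exact: Hz.
apply: cvg_within_filter.
have hx : 2^-1 < x < 1 by rewrite x1 xl1.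
rewrite gfunE //; apply: cvg_EFin.
  by near=> z; rewrite gfunE ?lt_eqF //; near: z.
apply: (cvg_trans _ (Kf_cont hb hx)); apply: near_eq_cvg.
near=> z; rewrite /= gfunE ?lt_eqF //.
by near: z.
Unshelve. all: by end_near. Qed.

End S.

Unset Implicit Arguments.
Set Strict Implicit.

Theorem lemmaB2 (R : realType) :
  (* (i) continuity in x on [1/2,1], as an extended-real-valued function *)
  (forall b : R, 0 < b < 1 ->
     {within `[2^-1, 1], continuous (fun x => gfun x b)})
  /\
  (* (ii) strictly increasing in x on [1/2,1] *)
  (forall b x y : R, 0 < b < 1 -> 2^-1 <= x -> x < y -> y <= 1 ->
     (gfun x b < gfun y b)%E)
  /\
  (* (ii) strictly decreasing in b (for x in [1/2,1); at x = 1 both sides are +oo) *)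
  (forall x b1 b2 : R, 2^-1 <= x < 1 -> 0 < b1 -> b1 < b2 -> b2 < 1 ->
     (gfun x b2 < gfun x b1)%E)
  /\
  (* (iii) existence and uniqueness of the solution xhat in (1/2,1) *)
  (forall phi hG b : R, 0 < phi < 1 -> 1 < hG ->
     2 / (phi * (hG - 1) + 2) < b -> b < 1 ->
     exists! x : R, 2^-1 < x < 1 /\ gfun x b = (phi * (hG - 1))%:E)
  /\
  (* (iii) xhat(phi,hG,b) is strictly increasing in each of b, hG, phi:
     if (phi1,hG1,b1) <= (phi2,hG2,b2) differ in exactly one coordinate
     (strictly larger), then the solutions satisfy x1 < x2 *)
  (forall phi1 hG1 b1 phi2 hG2 b2 x1 x2 : R,
     0 < phi1 < 1 -> 1 < hG1 -> 2 / (phi1 * (hG1 - 1) + 2) < b1 -> b1 < 1 ->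
     0 < phi2 < 1 -> 1 < hG2 -> 2 / (phi2 * (hG2 - 1) + 2) < b2 -> b2 < 1 ->
     [\/ [/\ b1 < b2, hG1 = hG2 & phi1 = phi2],
         [/\ b1 = b2, hG1 < hG2 & phi1 = phi2] |
         [/\ b1 = b2, hG1 = hG2 & phi1 < phi2]] ->
     2^-1 < x1 < 1 -> gfun x1 b1 = (phi1 * (hG1 - 1))%:E ->
     2^-1 < x2 < 1 -> gfun x2 b2 = (phi2 * (hG2 - 1))%:E ->
     x1 < x2).
Proof.
have bpos : forall (phi hG b : R), 0 < phi -> 1 < hG ->
    2 / (phi * (hG - 1) + 2) < b -> 0 < b /\ 2 / b - 2 < phi * (hG - 1).
  move=> phi hG b p0 h1 hb.
  have v0 : 0 < phi * (hG - 1) by rewrite mulr_gt0 // subr_gt0.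
  have b0 : 0 < b by apply: lt_trans hb; rewrite divr_gt0 // addr_gt0.
  split => //.
  move: hb; rewrite ltr_pdivrMr ?addr_gt0 // => hb.
  rewrite ltrBlDr ltr_pdivrMr //; lra.
split; first by move=> b hb; exact: gfun_cont.
split.
  move=> b x y hb x1 xy y1.
  have xl1 : x < 1 by apply: lt_le_trans y1.
  case: (eqVneq y 1) => [->|yn1].
    by rewrite gfunE ?lt_eqF // /gfun eqxx ltey.
  have yl1 : y < 1 by rewrite lt_neqAle yn1 y1.
  rewrite !gfunE ?lt_eqF // lte_fin; exact: Kf_lt.
split.
  move=> x b1 b2 hx b10 b12 b21; have /andP[x1 x2] := hx.
  by rewrite !gfunE ?lt_eqF // lte_fin; apply: Kf_lt_b.
split.
  move=> phi hG b /andP[p0 p1] hG1 hb hb1.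
  have [b0 hv] := bpos phi hG b p0 hG1 hb.
  have hbb : 0 < b < 1 by rewrite b0 hb1.
  have [x [hx Kx]] := Kf_solve hbb hv.
  have /andP[x1 x2] := hx.
  exists x; split.
    by split => //; rewrite gfunE ?lt_eqF // Kx.
  move=> y [/andP[y1 y2] gy].
  move: gy; rewrite gfunE ?lt_eqF // => -[Ky].
  case: (ltgtP x y) => // [xy|yx].
    by have := Kf_lt hbb (ltW x1) xy y2; rewrite Kx Ky ltxx.
  by have := Kf_lt hbb (ltW y1) yx x2; rewrite Kx Ky ltxx.
move=> phi1 hG1 b1 phi2 hG2 b2 x1 x2 /andP[p10 p11] h1 hb1 hb1'
  /andP[p20 p21] h2 hb2 hb2' cs /andP[x11 x12] g1 /andP[x21 x22] g2.
have [b10 _] := bpos phi1 hG1 b1 p10 h1 hb1.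
have [b20 _] := bpos phi2 hG2 b2 p20 h2 hb2.
have hbb1 : 0 < b1 < 1 by rewrite b10 hb1'.
have hbb2 : 0 < b2 < 1 by rewrite b20 hb2'.
move: g1 g2; rewrite !gfunE ?lt_eqF // => -[K1] [K2].
apply: (Kf_mono_rev hbb2); first by rewrite (ltW x11) x12.
  by rewrite (ltW x21) x22.
rewrite K2.
case: cs => -[bb hh pp].
- rewrite -hh -pp -K1; apply: Kf_lt_b => //.
  by rewrite (ltW x11) x12.
- rewrite -bb K1 pp ltr_pM2l //; lra.
- rewrite -bb K1 -hh ltr_pM2r // subr_gt0.
  done.
Qed.
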